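(* Let $c,d>0$, $g(x)=xF(c,d;c+d;x)$ for $x\in(0,1)$, let $0<a<1<b$, and set $\varphi(y)=\max\{y^a,y^b\}$ and $\varphi^{-1}(y)=\min\{y^{1/a},y^{1/b}\}$ for $y>0$. Let $\beta\in(0,1)$ be the unique solution of $$g\!\left(\frac{\varphi^{-1}(x/(1-x))}{1+\varphi^{-1}(x/(1-x))}\right)=1.$$ Put $a_0=\frac{cd}{c+d}$, $h=\frac{a_0^2}{c+d+1}$, $c_0=1-\frac{1}{2\log 2}$, $c_1=\frac{1}{\log 2}-1$. Then (1) if $(a_0-1)/h\le c_0$, then $\beta>1/2$; (2) if $(a_0-1)/h\ge c_1$, then $\beta<1/2$.
   Context: $F(a,b;c;x)$ is the Gaussian hypergeometric function $\sum_{n\ge0}\frac{(a)_n(b)_n}{(c)_n}\frac{x^n}{n!}$ ($|x|<1$), with $(a)_n=a(a+1)\cdots(a+n-1)$, $(a)_0=1$. *)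

(* Defs.v *)
From Stdlib Require Import Reals Arith.
Open Scope R_scope.

Fixpoint poch (a : R) (n : nat) : R :=
  match n with
  | O => 1
  | S k => poch a k * (a + INR k)
  end.

Definition hyp_term (a b c x : R) (n : nat) : R :=
  poch a n * poch b n / poch c n * x ^ n / INR (fact n).

Definition phi (a b y : R) : R := Rmax (Rpower y a) (Rpower y b).
Definition phiinv (a b y : R) : R := Rmin (Rpower y (1 / a)) (Rpower y (1 / b)).

(* The function of x appearing in the defining equation of beta,
   with g(x) = x * F(c,d;c+d;x). *)
Definition beta_lhs (F : R -> R) (a b x : R) : R :=
  let t := phiinv a b (x / (1 - x)) in
  let u := t / (1 + t) in
  u * F u.

(* Main.v *)
Require Import Defs.
From Stdlib Require Import Reals Lra Lia Psatz.
From Coquelicot Require Import Coquelicot.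
Open Scope R_scope.

Fixpoint tau (P s : R) (k : nat) : R :=
  match k with
  | O => 1
  | S j => tau P s j * (INR j + P / (s + INR j)) / (INR j + 1)
  end.

Lemma poch_pos a n : 0 < a -> 0 < poch a n.
Proof.
  intro Ha; induction n as [|n IH]; simpl; [lra|].
  apply Rmult_lt_0_compat; [exact IH|]. pose proof (pos_INR n); lra.
Qed.

Lemma INR_fact_pos n : 0 < INR (Factorial.fact n).
Proof. apply lt_0_INR. apply Factorial.lt_O_fact. Qed.

Lemma tau_poch c d n : 0 < c -> 0 < d ->
  poch c n * poch d n / poch (c + d) n / INR (Factorial.fact n) = tau (c * d) (c + d) n.
Proof.
  intros Hc Hd. induction n as [|n IH].
  - simpl. field.
  - simpl tau. rewrite <- IH. simpl poch.
    rewrite fact_simpl, mult_INR.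
    pose proof (poch_pos c n Hc). pose proof (poch_pos d n Hd).
    pose proof (poch_pos (c+d) n ltac:(lra)). pose proof (INR_fact_pos n).
    pose proof (pos_INR n).
    rewrite S_INR.
    field. repeat split; lra.
Qed.

Lemma hyp_term_tau c d x n : 0 < c -> 0 < d ->
  hyp_term c d (c + d) x n = tau (c * d) (c + d) n * x ^ n.
Proof.
  intros Hc Hd. rewrite <- tau_poch by assumption. unfold hyp_term.
  pose proof (poch_pos (c+d) n ltac:(lra)). pose proof (INR_fact_pos n).
  field. split; lra.
Qed.
Definition SP P s n := sum_f_R0 (fun k => tau P s k * (1/2)^k) n.
Definition DT P s k := (1/2)^k * (tau P s (S k) - tau P s k).

Lemma tau_pos P s k : 0 < P -> 0 < s -> 0 < tau P s k.
Proof.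
  intros HP Hs; induction k as [|k IH]; simpl; [lra|].
  pose proof (pos_INR k).
  apply Rmult_lt_0_compat; [apply Rmult_lt_0_compat; [exact IH|]|].
  - assert (0 < P / (s + INR k)) by (apply Rdiv_lt_0_compat; lra). lra.
  - apply Rinv_0_lt_compat; lra.
Qed.

Lemma tau_step P s k : 0 < s ->
  tau P s (S k) - tau P s k = tau P s k * (P - s - INR k) / ((s + INR k) * (INR k + 1)).
Proof.
  intros Hs. simpl tau. pose proof (pos_INR k). field. lra.
Qed.

Lemma SP_ident P s n : 0 < s ->
  2 * SP P s (S n) - 2 - SP P s n = sum_f_R0 (DT P s) n.
Proof.
  intros Hs. unfold SP. induction n as [|n IH].
  - simpl sum_f_R0. unfold DT. simpl. field. lra.
  - replace (sum_f_R0 (DT P s) (S n)) with (sum_f_R0 (DT P s) n + DT P s (S n)) by reflexivity.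
    rewrite <- IH. unfold DT.
    replace (sum_f_R0 (fun k : nat => tau P s k * (1 / 2) ^ k) (S (S n)))
      with (sum_f_R0 (fun k : nat => tau P s k * (1 / 2) ^ k) (S n) + tau P s (S (S n)) * (1/2)^(S (S n))) by reflexivity.
    replace (sum_f_R0 (fun k : nat => tau P s k * (1 / 2) ^ k) (S n))
      with (sum_f_R0 (fun k : nat => tau P s k * (1 / 2) ^ k) n + tau P s (S n) * (1/2)^(S n)) by reflexivity.
    simpl pow. field.
Qed.
Fixpoint lsum (n:nat) (x:R) : R := match n with O => 0 | S j => lsum j x + x^(S j)/(INR j + 1) end.
Fixpoint gsum (n:nat) (x:R) : R := match n with O => 0 | S j => gsum j x + x^j end.

Lemma lsum_deriv n x : is_derive (lsum n) x (gsum n x).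
Proof.
  induction n as [|n IH]; simpl.
  - auto_derive; easy.
  - apply (is_derive_plus (lsum n) (fun x => x^(S n)/(INR n + 1))); [exact IH|].
    auto_derive; [easy|]. change (match n with | 0%nat => 1 | S _ => INR n + 1 end) with (INR (S n)). rewrite S_INR. pose proof (pos_INR n). field. lra.
Qed.

Lemma gsum_closed n x : gsum n x * (1 - x) = 1 - x^n.
Proof. induction n as [|n IH]; simpl; [ring|]. rewrite Rmult_plus_distr_r, IH. ring. Qed.

Lemma psi_deriv n dl x : x < 1 ->
  is_derive (fun x => lsum n x + x^(S n)/((INR n + 1) * (1-x)) + ln (1-x) + dl * x) x
    (x^(S n)/((INR n + 1) * (1-x)^2) + dl).
Proof.
  intro Hx.
  pose proof (lsum_deriv n x) as H1.
  auto_derive.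
  - repeat split; try lra. exists (gsum n x); exact H1.
  - pose proof (pos_INR n). apply Rmult_integral_contrapositive; split; lra.
  - replace (Derive (fun x0 : R => lsum n x0) x) with (gsum n x) by (symmetry; apply is_derive_unique; exact H1).
    assert (Hg : gsum n x = (1 - x^n)/(1-x)).
    { pose proof (gsum_closed n x). field_simplify_eq; [lra|lra]. }
    rewrite Hg. pose proof (pos_INR n). change (match n with | 0%nat => 1 | S _ => INR n + 1 end) with (INR (S n)). rewrite S_INR. simpl pow. field. lra.
Qed.

Lemma lsum_0 n : lsum n 0 = 0.
Proof. induction n as [|n IH]; simpl; [reflexivity|]. rewrite IH. field. pose proof (pos_INR n); lra. Qed.

Lemma ln2_upper n : ln 2 <= lsum n (1/2) + (1/2)^n / (INR n + 1).
Proof.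
  apply Rnot_lt_le. intro Hc.
  set (dl := ln 2 - (lsum n (1/2) + (1/2)^n / (INR n + 1))).
  assert (Hdl : 0 < dl) by (unfold dl; lra).
  set (psi := fun x => lsum n x + x^(S n)/((INR n + 1) * (1-x)) + ln (1-x) + dl * x).
  assert (Hi : psi 0 < psi (1/2)).
  { apply (incr_function_le psi (Finite 0) (Finite (1/2)) (fun x => x^(S n)/((INR n + 1) * (1-x)^2) + dl)).
    - intros x Ha Hb. simpl in Ha, Hb. apply psi_deriv. lra.
    - intros x Ha Hb. simpl in Ha, Hb. pose proof (pos_INR n).
      assert (0 <= x^(S n)/((INR n + 1) * (1-x)^2)).
      { apply Rdiv_le_0_compat. apply pow_le; lra. apply Rmult_lt_0_compat; [lra|]. apply pow_lt; lra. }
      lra.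
    - simpl; lra.
    - lra.
    - simpl; lra. }
  unfold psi in Hi. rewrite lsum_0 in Hi.
  replace (1 - 0) with 1 in Hi by ring. rewrite ln_1 in Hi.
  replace (1 - 1/2) with (/2) in Hi by field. rewrite ln_Rinv in Hi by lra.
  replace ((1/2)^(S n) / ((INR n + 1) * /2)) with ((1/2)^n/(INR n + 1)) in Hi
    by (simpl; field; pose proof (pos_INR n); lra).
  replace (0 ^ S n) with 0 in Hi by (simpl; ring).
  unfold dl in Hi. lra.
Qed.
Lemma mle (m s c : R) : 0 < m -> 0 < s -> s + m <= s^2/4 -> m * s * (s+1) <= c * (s+m)^2 -> 0 < c < 1/3 -> m <= c.
Proof.
  intros Hm Hs Hp H Hc. apply Rnot_lt_le; intro Hlt.
  assert (H1 : 0 < (m - c) * (s*s)) by (apply Rmult_lt_0_compat; nra).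
  assert (H2 : 0 < m * s * (1 - 3*c)) by (apply Rmult_lt_0_compat; nra).
  destruct (Rle_lt_dec m s) as [Hms|Hms].
  - assert (H3 : 0 <= c * m * (s - m)) by (apply Rmult_le_pos; nra).
    nra.
  - assert (H4 : m <= s*s/4) by nra.
    assert (H5 : c * (m*m) <= c * m * (s*s)/4) by nra.
    assert (H6 : 0 < m * (1 - c/4) - c) by nra.
    assert (H7 : 0 < (m * (1 - c/4) - c) * (s*s)) by (apply Rmult_lt_0_compat; nra).
    nra.
Qed.


Lemma DT_eq P s k : 0 < s -> DT P s k = (1/2)^k * (tau P s k / (s + INR k)) * ((P - s - INR k) / (INR k + 1)).
Proof. intro Hs. unfold DT. rewrite tau_step by lra. pose proof (pos_INR k). field. lra. Qed.

Lemma div_ge (a b c : R) : 0 < b -> c * b <= a -> c <= a / b.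
Proof. intros Hb H. apply Rmult_le_reg_r with b; [lra|]. unfold Rdiv. rewrite Rmult_assoc, Rinv_l; lra. Qed.

Lemma ndiv_le (a b : R) : a <= 0 -> 0 < b -> a / b <= 0.
Proof. intros Ha Hb. unfold Rdiv. assert (0 < / b) by (apply Rinv_0_lt_compat; lra). nra. Qed.
Lemma ndiv_lt (a b : R) : a < 0 -> 0 < b -> a / b < 0.
Proof. intros Ha Hb. unfold Rdiv. assert (0 < / b) by (apply Rinv_0_lt_compat; lra). nra. Qed.

Lemma mul_neg_r (a b c : R) : a <= b -> c <= 0 -> b * c <= a * c.
Proof. intros; nra. Qed.

Lemma DT_nonpos P s k : 0 < s -> 0 < P -> P - s <= INR k -> DT P s k <= 0.
Proof.
  intros Hs HP Hk. rewrite DT_eq by lra. pose proof (pos_INR k).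
  pose proof (tau_pos P s k HP Hs).
  assert (0 <= (1/2)^k) by (apply pow_le; lra).
  assert (0 <= tau P s k / (s + INR k)) by (apply Rdiv_le_0_compat; lra).
  assert ((P - s - INR k) / (INR k + 1) <= 0).
  { apply ndiv_le; lra. }
  assert (0 <= (1/2)^k * (tau P s k / (s + INR k))) by (apply Rmult_le_pos; lra).
  nra.
Qed.

Lemma tau1 P s : 0 < s -> tau P s 1 = P / s.
Proof. intro. simpl. field. lra. Qed.
Lemma tauS P s k : tau P s (S k) = tau P s k * (INR k + P / (s + INR k)) / (INR k + 1).
Proof. reflexivity. Qed.

Lemma A_core P s : 0 < s -> 0 < P ->
  ((P - s <= 0) \/ (0 < P - s < 2843/10000 /\ 4 < s)) ->
  sum_f_R0 (DT P s) 4 < 0.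
Proof.
  intros Hs HP Hcase.
  assert (E : sum_f_R0 (DT P s) 4 = DT P s 0 + DT P s 1 + DT P s 2 + DT P s 3 + DT P s 4) by reflexivity.
  rewrite E.
  assert (D0 : DT P s 0 = (P - s) / s) by (unfold DT; simpl; field; lra).
  destruct Hcase as [Hm|[Hm Hs4]].
  - assert (H1 : DT P s 1 < 0).
    { rewrite DT_eq by lra. pose proof (tau_pos P s 1 HP Hs).
      assert (0 < tau P s 1 / (s + INR 1)) by (apply Rdiv_lt_0_compat; [lra | simpl; lra]).
      assert ((P - s - INR 1) / (INR 1 + 1) < 0) by (simpl; apply ndiv_lt; lra).
      simpl pow. nra. }
    assert (DT P s 2 <= 0) by (apply DT_nonpos; simpl; lra).
    assert (DT P s 3 <= 0) by (apply DT_nonpos; simpl; lra).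
    assert (DT P s 4 <= 0) by (apply DT_nonpos; simpl; lra).
    assert ((P - s) / s <= 0) by (apply ndiv_le; lra).
    lra.
  -
    assert (Ht1 : 1 <= tau P s 1) by (rewrite tau1 by lra; apply div_ge; lra).
    assert (Hq1 : 4/5 <= P / (s + 1)) by (apply div_ge; lra).
    assert (Hq2 : 2/3 <= P / (s + 2)) by (apply div_ge; lra).
    assert (Hq3 : 4/7 <= P / (s + 3)) by (apply div_ge; lra).
    assert (Ht2 : 9/10 <= tau P s 2).
    { rewrite tauS. replace (INR 1) with 1 by reflexivity.
      apply div_ge; [lra|]. nra. }
    assert (Ht3 : 4/5 <= tau P s 3).
    { rewrite tauS. replace (INR 2) with 2 by (simpl; ring).
      apply div_ge; [lra|]. nra. }
    assert (Ht4 : 5/7 <= tau P s 4).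
    { rewrite tauS. replace (INR 3) with 3 by (simpl; ring).
      apply div_ge; [lra|]. nra. }
    assert (K : forall k lb, (1 <= k <= 4)%nat -> 0 <= lb -> lb <= tau P s k ->
              DT P s k <= (1/2)^k * (lb * 4 / ((4 + INR k) * s)) * ((P - s - INR k) / (INR k + 1))).
    { intros k lb Hk Hlb0 Hlb. rewrite DT_eq by lra.
      assert (HkR1 : 1 <= INR k) by (apply (le_INR 1); lia).
      assert (HkR2 : INR k <= 4) by (replace 4 with (INR 4) by (simpl; ring); apply le_INR; lia).
      assert (F1 : 4 * (s + INR k) / ((4 + INR k) * s) <= 1).
      { apply Rmult_le_reg_r with ((4 + INR k) * s); [nra|].
        unfold Rdiv. rewrite Rmult_assoc, Rinv_l by nra. nra. }
      assert (X : lb * 4 / ((4 + INR k) * s) <= tau P s k / (s + INR k)).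
      { apply div_ge; [lra|].
        replace (lb * 4 / ((4 + INR k) * s) * (s + INR k)) with (lb * (4 * (s + INR k) / ((4 + INR k) * s))) by (field; nra).
        nra. }
      assert (Y : (P - s - INR k) / (INR k + 1) <= 0).
      { apply ndiv_le; lra. }
      assert (0 <= (1/2)^k) by (apply pow_le; lra).
      apply mul_neg_r; [|exact Y].
      apply Rmult_le_compat_l; [lra|exact X]. }
    assert (B1 : DT P s 1 <= (P - s - 1) / (5 * s)).
    { eapply Rle_trans; [apply (K 1%nat 1); [lia|lra|exact Ht1]|]. right. simpl. field. lra. }
    assert (B2 : DT P s 2 <= (P - s - 2) / (20 * s)).
    { eapply Rle_trans; [apply (K 2%nat (9/10)); [lia|lra|exact Ht2]|]. right. simpl. field. lra. }
    assert (B3 : DT P s 3 <= (P - s - 3) / (70 * s)).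
    { eapply Rle_trans; [apply (K 3%nat (4/5)); [lia|lra|exact Ht3]|]. right. simpl. field. lra. }
    assert (B4 : DT P s 4 <= (P - s - 4) / (224 * s)).
    { eapply Rle_trans; [apply (K 4%nat (5/7)); [lia|lra|exact Ht4]|]. right. simpl. field. lra. }
    assert (Tot : (P - s) / s + (P - s - 1) / (5 * s) + (P - s - 2) / (20 * s) + (P - s - 3) / (70 * s) + (P - s - 4) / (224 * s)
               = ((P - s) + (P - s - 1) / 5 + (P - s - 2) / 20 + (P - s - 3) / 70 + (P - s - 4) / 224) / s) by (field; lra).
    assert (((P - s) + (P - s - 1) / 5 + (P - s - 2) / 20 + (P - s - 3) / 70 + (P - s - 4) / 224) / s < 0) by (apply ndiv_lt; lra).
    lra.
Qed.


Lemma tau_le P s k : 0 < s -> 0 < P -> P - s <= 1 -> (1 <= k)%nat -> tau P s k <= P / s.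
Proof.
  intros Hs HP Hm Hk. induction k as [|k IH]; [lia|].
  destruct k as [|k].
  - rewrite tau1 by lra. lra.
  - rewrite tauS. specialize (IH ltac:(lia)).
    pose proof (tau_pos P s (S k) HP Hs).
    assert (HkR : 1 <= INR (S k)) by (apply (le_INR 1); lia).
    assert (Hq : P / (s + INR (S k)) <= 1).
    { apply Rmult_le_reg_r with (s + INR (S k)); [lra|]. unfold Rdiv. rewrite Rmult_assoc, Rinv_l by lra. lra. }
    assert (Hf : (INR (S k) + P / (s + INR (S k))) / (INR (S k) + 1) <= 1).
    { apply Rmult_le_reg_r with (INR (S k) + 1); [lra|]. unfold Rdiv. rewrite Rmult_assoc, Rinv_l by lra. lra. }
    assert (0 <= (INR (S k) + P / (s + INR (S k))) / (INR (S k) + 1)).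
    { apply Rdiv_le_0_compat; [|lra]. assert (0 <= P / (s + INR (S k))) by (apply Rdiv_le_0_compat; lra). lra. }
    unfold Rdiv at 1. rewrite Rmult_assoc. fold ((INR (S k) + P / (s + INR (S k))) / (INR (S k) + 1)).
    nra.
Qed.

Lemma div_le_r (a b c : R) : 0 < c -> a <= b -> a / c <= b / c.
Proof. intros Hc H. unfold Rdiv. apply Rmult_le_compat_r; [apply Rlt_le, Rinv_0_lt_compat; lra|exact H]. Qed.

Definition rho (m s x : R) := (x - m) / (x + 1) - (x - m)^2 / (x * (x + 1) * (s + 1)).

Fixpoint rsum (m s : R) (n : nat) : R :=
  match n with O => 0 | S j => rsum m s j + (1/2)^(S j) * rho m s (INR (S j)) end.

Lemma DT_ge P s k : 0 < s -> 0 < P - s <= 1 -> (1 <= k)%nat ->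
  - ((1/2)^k * rho (P - s) s (INR k)) / s <= DT P s k.
Proof.
  intros Hs Hm Hk. rewrite DT_eq by lra.
  assert (HkR : 1 <= INR k) by (apply (le_INR 1); lia).
  pose proof (tau_le P s k Hs ltac:(lra) ltac:(lra) Hk) as Ht.
  pose proof (tau_pos P s k ltac:(lra) Hs) as Ht0.
  assert (Hpow : 0 < (1/2)^k) by (apply pow_lt; lra).
  assert (Y : (P - s - INR k) / (INR k + 1) <= 0) by (apply ndiv_le; lra).
  assert (X : tau P s k / (s + INR k) <= (P / s) / (s + INR k)).
  { apply div_le_r; lra. }
  apply Rle_trans with ((1/2)^k * ((P / s) / (s + INR k)) * ((P - s - INR k) / (INR k + 1))).
  - assert (Key : - rho (P - s) s (INR k) / s <= ((P / s) / (s + INR k)) * ((P - s - INR k) / (INR k + 1))).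
    { unfold rho.
      assert (E1 : ((P / s) / (s + INR k)) * ((P - s - INR k) / (INR k + 1))
                 = - ((INR k - (P - s)) * (s + (P - s)) / ((s + INR k) * (INR k + 1))) / s) by (field; lra).
      rewrite E1. apply div_le_r; [lra|].
      apply Ropp_le_contravar.
      assert (E2 : (INR k - (P - s)) / (INR k + 1) - (INR k - (P - s)) ^ 2 / (INR k * (INR k + 1) * (s + 1)) - (INR k - (P - s)) * (s + (P - s)) / ((s + INR k) * (INR k + 1))
                 = (INR k - (P - s)) * (INR k - (P - s)) * ((s + 1) * INR k - (s + INR k)) / (INR k * (INR k + 1) * (s + 1) * (s + INR k))) by (field; lra).
      assert (0 <= (INR k - (P - s)) * (INR k - (P - s)) * ((s + 1) * INR k - (s + INR k)) / (INR k * (INR k + 1) * (s + 1) * (s + INR k))).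
      { apply Rdiv_le_0_compat; [|apply Rmult_lt_0_compat; [|lra]; apply Rmult_lt_0_compat; [|lra]; apply Rmult_lt_0_compat; lra].
        apply Rmult_le_pos; [nra| nra]. }
      lra. }
    replace (- ((1 / 2) ^ k * rho (P - s) s (INR k)) / s) with ((1/2)^k * (- rho (P - s) s (INR k) / s)) by (field; lra).
    rewrite Rmult_assoc. apply Rmult_le_compat_l; lra.
  - apply mul_neg_r; [|exact Y]. apply Rmult_le_compat_l; lra.
Qed.

Lemma sumDT_ge P s n : 0 < s -> 0 < P - s <= 1 ->
  (P - s) / s - rsum (P - s) s n / s <= sum_f_R0 (DT P s) n.
Proof.
  intros Hs Hm. induction n as [|n IH].
  - simpl. unfold DT. simpl. right. field. lra.
  - replace (sum_f_R0 (DT P s) (S n)) with (sum_f_R0 (DT P s) n + DT P s (S n)) by reflexivity.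
    pose proof (DT_ge P s (S n) Hs Hm ltac:(lia)).
    change (rsum (P - s) s (S n)) with (rsum (P-s) s n + (1/2)^(S n) * rho (P-s) s (INR (S n))).
    replace ((P - s) / s - (rsum (P - s) s n + (1 / 2) ^ S n * rho (P - s) s (INR (S n))) / s)
      with ((P - s) / s - rsum (P - s) s n / s + (- ((1/2)^(S n) * rho (P - s) s (INR (S n))) / s)) by (field; lra).
    lra.
Qed.

Fixpoint gh (n : nat) : R := match n with O => 0 | S j => gh j + (1/2)^(S j) end.
Fixpoint mh (n : nat) : R := match n with O => 0 | S j => mh j + (1/2)^(S j) / (INR (S j) + 1) end.

Lemma gh_closed n : gh n = 1 - (1/2)^n.
Proof. induction n as [|n IH]; simpl; [ring|]. rewrite IH. simpl. field. Qed.

Lemma mh_closed n : mh n = 2 * lsum (S n) (1/2) - 1.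
Proof.
  induction n as [|n IH].
  - simpl. field.
  - change (mh (S n)) with (mh n + (1/2)^(S n) / (INR (S n) + 1)). rewrite IH.
    change (lsum (S (S n)) (1/2)) with (lsum (S n) (1/2) + (1/2)^(S (S n)) / (INR (S n) + 1)).
    pose proof (pos_INR (S n)). simpl pow. field. lra.
Qed.

Lemma rsum_closed m s n : 0 < s ->
  rsum m s n = (1 - 1/(s+1)) * gh n + (-(1+m) + (1+2*m)/(s+1) + m^2/(s+1)) * mh n + (- m^2/(s+1)) * lsum n (1/2).
Proof.
  intro Hs. induction n as [|n IH].
  - simpl. ring.
  - change (rsum m s (S n)) with (rsum m s n + (1/2)^(S n) * rho m s (INR (S n))).
    change (gh (S n)) with (gh n + (1/2)^(S n)).
    change (mh (S n)) with (mh n + (1/2)^(S n) / (INR (S n) + 1)).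
    change (lsum (S n) (1/2)) with (lsum n (1/2) + (1/2)^(S n) / (INR n + 1)).
    rewrite IH. unfold rho.
    rewrite S_INR. pose proof (pos_INR n). field. lra.
Qed.


Lemma lim_D (P s Fp : R) : 0 < s -> is_lim_seq (SP P s) Fp ->
  is_lim_seq (fun n => sum_f_R0 (DT P s) n) (Fp - 2).
Proof.
  intros Hs HF.
  apply is_lim_seq_ext with (fun n => 2 * SP P s (S n) - 2 - SP P s n).
  { intro n. apply SP_ident; lra. }
  replace (Fp - 2) with (2 * Fp - 2 - Fp) by ring.
  apply is_lim_seq_minus'; [apply is_lim_seq_minus'|exact HF].
  - apply (is_lim_seq_scal_l (fun n => SP P s (S n)) 2 Fp).
    apply (is_lim_seq_incr_1 (SP P s) Fp). exact HF.
  - apply is_lim_seq_const.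
Qed.

Lemma lim_gh : is_lim_seq gh 1.
Proof.
  apply is_lim_seq_ext with (fun n => 1 - (1/2)^n).
  { intro n. symmetry. apply gh_closed. }
  assert (H : is_lim_seq (fun n => 1 - (1/2)^n) (1 - 0)).
  { apply is_lim_seq_minus'; [apply is_lim_seq_const|].
    apply is_lim_seq_geom. rewrite Rabs_pos_eq; lra. }
  rewrite Rminus_0_r in H. exact H.
Qed.

Lemma lim_mh (L : R) : is_lim_seq (fun n => lsum n (1/2)) L -> is_lim_seq mh (2 * L - 1).
Proof.
  intro HL.
  apply is_lim_seq_ext with (fun n => 2 * lsum (S n) (1/2) - 1).
  { intro n. symmetry. apply mh_closed. }
  apply is_lim_seq_minus'; [|apply is_lim_seq_const].
  apply (is_lim_seq_scal_l (fun n => lsum (S n) (1/2)) 2 L).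
  apply (is_lim_seq_incr_1 (fun n => lsum n (1/2)) L). exact HL.
Qed.

Definition Rinf m s L := (1 - 1/(s+1)) * 1 + (-(1+m) + (1+2*m)/(s+1) + m^2/(s+1)) * (2 * L - 1) + (- m^2/(s+1)) * L.

Lemma B_lim (P s Fp L : R) : 0 < s -> 0 < P - s <= 1 -> is_lim_seq (SP P s) Fp ->
  is_lim_seq (fun n => lsum n (1/2)) L ->
  (P - s) / s - Rinf (P - s) s L / s <= Fp - 2.
Proof.
  intros Hs Hm HF HL.
  assert (H1 : is_lim_seq (fun n => (P - s) / s - rsum (P - s) s n / s) ((P - s) / s - Rinf (P - s) s L / s)).
  { apply is_lim_seq_minus'; [apply is_lim_seq_const|].
    unfold Rdiv at 2. apply is_lim_seq_ext with (fun n => / s * rsum (P - s) s n).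
    { intro n. unfold Rdiv. ring. }
    replace (Rinf (P - s) s L * / s) with (/ s * Rinf (P - s) s L) by ring.
    apply (is_lim_seq_scal_l (rsum (P - s) s) (/ s) (Rinf (P - s) s L)).
    apply is_lim_seq_ext with (fun n => (1 - 1/(s+1)) * gh n + (-(1+(P-s)) + (1+2*(P-s))/(s+1) + (P-s)^2/(s+1)) * mh n + (- (P-s)^2/(s+1)) * lsum n (1/2)).
    { intro n. symmetry. apply rsum_closed; lra. }
    unfold Rinf.
    apply is_lim_seq_plus'; [apply is_lim_seq_plus'|].
    - apply (is_lim_seq_scal_l gh _ 1). apply lim_gh.
    - apply (is_lim_seq_scal_l mh _ (2 * L - 1)). apply lim_mh; exact HL.
    - apply (is_lim_seq_scal_l (fun n => lsum n (1/2)) _ L). exact HL. }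
  pose proof (lim_D P s Fp Hs HF) as H2.
  pose proof (is_lim_seq_le _ _ _ _ (fun n => sumDT_ge P s n Hs Hm) H1 H2) as H3.
  simpl in H3. exact H3.
Qed.


Lemma B_alg m s L l : 0 < m <= 1 -> 4 < s -> 1/2 < l < 3/4 -> l <= L -> L <= 1 ->
  m * s * (s+1) * l >= (1 - l) * (s+m)^2 -> 0 < m/s - Rinf m s L / s.
Proof.
  intros Hm Hs Hl HL HL1 H.
  assert (E : m/s - Rinf m s L / s = (2*L*(1+m)*(s+1) - 2*(s+1) + 2 + 2*m - 2*L - 4*m*L + m^2*(1-L)) / (s * (s+1)))
    by (unfold Rinf; field; lra).
  rewrite E. apply Rdiv_lt_0_compat; [|nra].
  set (T := fun x => 2*x*(1+m)*(s+1) - 2*(s+1) + 2 + 2*m - 2*x - 4*m*x + m^2*(1-x)).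
  assert (Hmono : T l <= T L).
  { unfold T. assert (0 <= (L - l) * (2*(1+m)*(s+1) - 2 - 4*m - m^2)) by (apply Rmult_le_pos; nra). nra. }
  assert (HTl : 0 < s * T l).
  { unfold T.
    assert (K : s * (2*l*(1+m)*(s+1) - 2*(s+1)) >= 2*(1-l)*(2*m*s + m^2 - s)).
    { assert (E2 : s * (2*l*(1+m)*(s+1) - 2*(s+1)) - 2*(1-l)*(2*m*s + m^2 - s)
                 = 2 * (m * s * (s+1) * l - (1 - l) * (s+m)^2)) by ring. lra. }
    assert (Q1 : 0 < m*(6-8*l)) by (apply Rmult_lt_0_compat; lra).
    assert (0 < s * (6*m - 8*m*l)) by (apply Rmult_lt_0_compat; lra).
    assert (0 <= m^2*(1-l)*(2+s)) by (apply Rmult_le_pos; [apply Rmult_le_pos; [apply pow2_ge_0|lra]|lra]).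
    assert (E3 : s * (2*l*(1+m)*(s+1) - 2*(s+1) + 2 + 2*m - 2*l - 4*m*l + m^2*(1-l))
      = s * (2*l*(1+m)*(s+1) - 2*(s+1)) + s * (2 + 2*m - 2*l - 4*m*l + m^2*(1-l))) by ring.
    assert (E4 : 2*(1-l)*(2*m*s + m^2 - s) + s * (2 + 2*m - 2*l - 4*m*l + m^2*(1-l)) = s * (6*m - 8*m*l) + m^2*(1-l)*(2+s)) by ring.
    lra. }
  assert (0 < T l).
  { apply Rmult_lt_reg_l with s; [lra|]. rewrite Rmult_0_r. exact HTl. }
  unfold T in *. lra.
Qed.

Lemma B_alg1 s L : 4 < s -> 2/3 <= L <= 1 -> 0 < 1/s - Rinf 1 s L / s.
Proof.
  intros Hs HL.
  assert (E : 1/s - Rinf 1 s L / s = (4*L*(s+1) - 2*(s+1) + 5 - 7*L) / (s * (s+1)))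
    by (unfold Rinf; field; lra).
  rewrite E. apply Rdiv_lt_0_compat; nra.
Qed.


Lemma lsum_half_le n : lsum n (1/2) <= 1 - (1/2)^n.
Proof.
  induction n as [|n IH]; simpl; [lra|].
  assert (H : (1/2) * (1/2)^n / (INR n + 1) <= (1/2) * (1/2)^n).
  { pose proof (pos_INR n). assert (0 <= (1/2)*(1/2)^n) by (pose proof (pow_le (1/2) n); lra).
    apply Rmult_le_reg_r with (INR n + 1); [lra|]. unfold Rdiv. rewrite Rmult_assoc, Rinv_l by lra. nra. }
  lra.
Qed.

Lemma L_exists : exists L : R, is_lim_seq (fun n => lsum n (1/2)) L /\ ln 2 <= L /\ 2/3 <= L <= 1.
Proof.
  assert (Hg : Un_growing (fun n => lsum n (1/2))).
  { intro n. simpl. assert (0 <= (1/2) * (1/2)^n / (INR n + 1)).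
    { apply Rdiv_le_0_compat; [pose proof (pow_le (1/2) n); lra| pose proof (pos_INR n); lra]. } lra. }
  assert (Hb : has_ub (fun n => lsum n (1/2))).
  { exists 1. intros x [n ->]. pose proof (lsum_half_le n). pose proof (pow_le (1/2) n). lra. }
  destruct (growing_cv _ Hg Hb) as [L HL].
  exists L. pose proof (proj2 (is_lim_seq_Reals _ _) HL) as HL'.
  pose proof (growing_ineq _ _ Hg HL) as Hle.
  split; [exact HL'|]. split; [|split].
  - assert (H1 : is_lim_seq (fun n => L + (1/2)^n) (L + 0)).
    { apply is_lim_seq_plus'; [apply is_lim_seq_const|]. apply is_lim_seq_geom. rewrite Rabs_pos_eq; lra. }
    rewrite Rplus_0_r in H1.
    assert (H2 : forall n, ln 2 <= L + (1/2)^n).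
    { intro n. pose proof (ln2_upper n). pose proof (Hle n).
      assert ((1/2)^n / (INR n + 1) <= (1/2)^n).
      { pose proof (pos_INR n). pose proof (pow_le (1/2) n).
        apply Rmult_le_reg_r with (INR n + 1); [lra|]. unfold Rdiv. rewrite Rmult_assoc, Rinv_l by lra. nra. }
      lra. }
    pose proof (is_lim_seq_le (fun _ => ln 2) _ (ln 2) L H2 (is_lim_seq_const _) H1) as H3.
    simpl in H3. exact H3.
  - pose proof (Hle 3%nat) as H3. cbv beta in H3.
    assert (E : lsum 3 (1/2) = 2/3) by (simpl; field).
    rewrite E in H3. exact H3.
  - assert (H2 : forall n, lsum n (1/2) <= 1).
    { intro n. pose proof (lsum_half_le n). pose proof (pow_le (1/2) n). lra. }
    pose proof (is_lim_seq_le _ (fun _ => 1) L 1 H2 HL' (is_lim_seq_const _)) as H3.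
    simpl in H3. exact H3.
Qed.

Lemma ln2_lt : ln 2 < 6934/10000.
Proof. pose proof (ln2_upper 6) as H.
  assert (E : lsum 6 (1/2) + (1/2)^6 / (INR 6 + 1) = 9319/13440) by (simpl; field).
  lra. Qed.

Lemma A_mon (P s : R) : 0 < s -> 0 < P -> P - s <= 5 ->
  forall n, sum_f_R0 (DT P s) (n + 4) <= sum_f_R0 (DT P s) 4.
Proof.
  intros Hs HP Hm.
  { induction n as [|n IH]; [simpl; lra|].
    replace (S n + 4)%nat with (S (n + 4)) by lia.
    change (sum_f_R0 (DT P s) (S (n + 4))) with (sum_f_R0 (DT P s) (n + 4) + DT P s (S (n + 4))).
    assert (DT P s (S (n + 4)) <= 0).
    { apply DT_nonpos; try lra. replace 5 with (INR 5) in Hm by (simpl; ring).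
      pose proof (le_INR 5 (S (n + 4)) ltac:(lia)). lra. }
    lra. }
Qed.

Lemma A_lim (P s Fp : R) : 0 < s -> 0 < P -> P - s <= 5 -> is_lim_seq (SP P s) Fp ->
  sum_f_R0 (DT P s) 4 < 0 -> Fp < 2.
Proof.
  intros Hs HP Hm HF H4.
  pose proof (A_mon P s Hs HP Hm) as Hmon.
  pose proof (lim_D P s Fp Hs HF) as HD.
  apply (is_lim_seq_incr_n _ 4) in HD.
  pose proof (is_lim_seq_le _ (fun _ => sum_f_R0 (DT P s) 4) _ _ Hmon HD (is_lim_seq_const _)) as H.
  change (Fp - 2 <= sum_f_R0 (DT P s) 4) in H. clear -H H4. lra.
Qed.


Lemma tau_mono P1 P2 s k : 0 < s -> 0 < P1 -> P1 <= P2 -> tau P1 s k <= tau P2 s k.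
Proof.
  intros Hs HP H. induction k as [|k IH]; [simpl; lra|].
  rewrite !tauS. pose proof (pos_INR k). pose proof (tau_pos P1 s k HP Hs).
  apply div_le_r; [lra|]. apply Rmult_le_compat; [lra| |exact IH|].
  - assert (0 <= P1 / (s + INR k)) by (apply Rdiv_le_0_compat; lra). lra.
  - apply Rplus_le_compat_l. apply div_le_r; lra.
Qed.

Lemma SP_growing P s : 0 < s -> 0 < P -> Un_growing (SP P s).
Proof.
  intros Hs HP n. change (SP P s (S n)) with (SP P s n + tau P s (S n) * (1/2)^(S n)).
  pose proof (tau_pos P s (S n) HP Hs).
  assert (0 < (1/2)^(S n)) by (apply pow_lt; lra).
  assert (0 < tau P s (S n) * (1/2)^(S n)) by (apply Rmult_lt_0_compat; lra).
  lra.
Qed.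

Lemma SP_le P1 P2 s n : 0 < s -> 0 < P1 -> P1 <= P2 -> SP P1 s n <= SP P2 s n.
Proof.
  intros. unfold SP. apply sum_growing. intro k.
  apply Rmult_le_compat_r; [apply pow_le; lra|]. apply tau_mono; lra.
Qed.

Lemma Rpower_1_l z : Rpower 1 z = 1.
Proof. unfold Rpower. rewrite ln_1, Rmult_0_r. apply exp_0. Qed.

Lemma phiinv_pos a b y : 0 < phiinv a b y.
Proof. unfold phiinv, Rmin. destruct (Rle_dec _ _); unfold Rpower; apply exp_pos. Qed.

Lemma phiinv_le1 a b y : 0 < a -> 0 < y <= 1 -> phiinv a b y <= 1.
Proof.
  intros Ha Hy. unfold phiinv. eapply Rle_trans; [apply Rmin_l|].
  apply Rle_trans with (Rpower 1 (1/a)); [|rewrite Rpower_1_l; lra].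
  apply Rle_Rpower_l; [|lra].
  apply Rlt_le, Rdiv_lt_0_compat; lra.
Qed.

Lemma phiinv_ge1 a b y : 0 < a -> 0 < b -> 1 <= y -> 1 <= phiinv a b y.
Proof.
  intros Ha Hb Hy. unfold phiinv. apply Rmin_glb.
  - apply Rle_trans with (Rpower 1 (1/a)); [rewrite Rpower_1_l; lra|].
    apply Rle_Rpower_l; [|lra]. apply Rlt_le, Rdiv_lt_0_compat; lra.
  - apply Rle_trans with (Rpower 1 (1/b)); [rewrite Rpower_1_l; lra|].
    apply Rle_Rpower_l; [|lra]. apply Rlt_le, Rdiv_lt_0_compat; lra.
Qed.


Lemma lim_of_sum c d (F : R -> R) x : 0 < c -> 0 < d ->
  infinite_sum (hyp_term c d (c + d) x) (F x) ->
  is_lim_seq (fun n => sum_f_R0 (fun k => tau (c*d) (c+d) k * x^k) n) (F x).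
Proof.
  intros Hc Hd H. apply is_lim_seq_Reals.
  intros eps Heps. destruct (H eps Heps) as [N HN]. exists N. intros n Hn.
  rewrite <- (sum_eq (hyp_term c d (c + d) x)); [apply HN; exact Hn|].
  intros i _. apply hyp_term_tau; assumption.
Qed.

Lemma F_mono c d (F : R -> R) u v : 0 < c -> 0 < d -> 0 < u <= v -> v < 1 ->
  (forall x, 0 < x < 1 -> infinite_sum (hyp_term c d (c + d) x) (F x)) ->
  0 <= F u /\ F u <= F v.
Proof.
  intros Hc Hd Hu Hv hF.
  pose proof (lim_of_sum c d F u Hc Hd (hF u ltac:(lra))) as Lu.
  pose proof (lim_of_sum c d F v Hc Hd (hF v ltac:(lra))) as Lv.
  split.
  - assert (H0 : forall n, 0 <= sum_f_R0 (fun k => tau (c*d) (c+d) k * u^k) n).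
    { intro n. apply cond_pos_sum. intro k. apply Rmult_le_pos.
      - apply Rlt_le, tau_pos; nra.
      - apply pow_le; lra. }
    pose proof (is_lim_seq_le (fun _ => 0) _ 0 (F u) H0 (is_lim_seq_const 0) Lu) as H. exact H.
  - assert (H0 : forall n, sum_f_R0 (fun k => tau (c*d) (c+d) k * u^k) n <= sum_f_R0 (fun k => tau (c*d) (c+d) k * v^k) n).
    { intro n. apply sum_growing. intro k. apply Rmult_le_compat_l.
      - apply Rlt_le, tau_pos; nra.
      - apply pow_incr; lra. }
    pose proof (is_lim_seq_le _ _ (F u) (F v) H0 Lu Lv) as H. exact H.
Qed.

Lemma F12_lt c d (F : R -> R) : 0 < c -> 0 < d ->
  infinite_sum (hyp_term c d (c + d) (1/2)) (F (1/2)) ->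
  (c*d - (c+d)) * (c+d) * (c+d+1) <= (1 - 1 / (2 * ln 2)) * (c*d)^2 -> F (1/2) < 2.
Proof.
  intros Hc Hd HF H.
  set (s := c + d) in *. set (p := c * d) in *.
  assert (Hs : 0 < s) by (unfold s; lra).
  assert (Hp : 0 < p) by (unfold p; nra).
  assert (Hps : p <= s^2/4) by (unfold p, s; pose proof (pow2_ge_0 (c - d)); nra).
  pose proof (lim_of_sum c d F (1/2) Hc Hd HF) as L. fold s p in L.
  assert (L' : is_lim_seq (SP p s) (F (1/2))) by exact L.
  pose proof ln2_lt. pose proof ln_lt_2.
  set (c0 := 1 - 1 / (2 * ln 2)) in *.
  assert (Ey : (1 / (2 * ln 2)) * (2 * ln 2) = 1) by (field; lra).
  assert (Hy1 : 72/100 < 1 / (2 * ln 2)).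
  { apply Rnot_le_lt; intro Hn.
    assert (1 / (2 * ln 2) * (2 * ln 2) <= 72/100 * (2 * ln 2)) by (apply Rmult_le_compat_r; lra). lra. }
  assert (Hy2 : 1 / (2 * ln 2) < 1).
  { apply Rnot_le_lt; intro Hn.
    assert (1 * (2 * ln 2) <= 1 / (2 * ln 2) * (2 * ln 2)) by (apply Rmult_le_compat_r; lra). lra. }
  assert (Hc0 : 0 < c0 < 28/100) by (unfold c0; lra).
  clear L.
  destruct (Rle_lt_dec (p - s) 0) as [Hm|Hm].
  - apply (A_lim p s (F (1/2)) Hs Hp ltac:(lra) L').
    apply A_core; lra.
  - assert (Hs4 : 4 < s) by nra.
    assert (Hmc : p - s <= c0).
    { apply (mle (p - s) s c0); [lra|lra|lra| |lra].
      replace (s + (p - s)) with p by ring. exact H. }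
    apply (A_lim p s (F (1/2)) Hs Hp ltac:(lra) L').
    apply A_core; lra.
Qed.

Lemma F12_gt c d (F : R -> R) : 0 < c -> 0 < d ->
  infinite_sum (hyp_term c d (c + d) (1/2)) (F (1/2)) ->
  (c*d - (c+d)) * (c+d) * (c+d+1) >= (1 / ln 2 - 1) * (c*d)^2 -> 2 < F (1/2).
Proof.
  intros Hc Hd HF H.
  set (s := c + d) in *. set (p := c * d) in *.
  assert (Hs : 0 < s) by (unfold s; lra).
  assert (Hp : 0 < p) by (unfold p; nra).
  assert (Hps : p <= s^2/4) by (unfold p, s; pose proof (pow2_ge_0 (c - d)); nra).
  pose proof (lim_of_sum c d F (1/2) Hc Hd HF) as L. fold s p in L.
  assert (L' : is_lim_seq (SP p s) (F (1/2))) by exact L.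
  clear L HF.
  pose proof ln2_lt as Hl1. pose proof ln_lt_2 as Hl2.
  assert (Ey : (1 / ln 2) * ln 2 = 1) by (field; lra).
  assert (Hc1 : 0 < 1 / ln 2 - 1).
  { assert (1 < 1 / ln 2); [|lra]. apply Rnot_le_lt; intro Hn.
    assert (1 / ln 2 * ln 2 <= 1 * ln 2) by (apply Rmult_le_compat_r; lra). lra. }
  assert (Hm : 0 < p - s).
  { apply Rnot_le_lt; intro Hn.
    assert (0 < (1 / ln 2 - 1) * p^2) by (apply Rmult_lt_0_compat; [lra|]; apply pow_lt; lra).
    assert ((p - s) * s * (s + 1) <= 0).
    { assert (0 <= s * (s+1)) by nra. nra. }
    lra. }
  assert (Hs4 : 4 < s) by nra.
  set (m := Rmin (p - s) 1).
  assert (Hm' : 0 < m <= 1) by (unfold m; split; [apply Rmin_glb_lt; lra|apply Rmin_r]).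
  assert (Hmp : m <= p - s) by (unfold m; apply Rmin_l).
  set (P := s + m).
  assert (HP : 0 < P) by (unfold P; lra).
  assert (Hub : forall n, SP P s n <= F (1/2)).
  { intro n. apply Rle_trans with (SP p s n).
    - apply SP_le; unfold P; lra.
    - apply growing_ineq; [apply SP_growing; lra|]. apply is_lim_seq_Reals. exact L'. }
  destruct (growing_cv (SP P s) (SP_growing P s Hs HP)) as [Fp HFp].
  { exists (F (1/2)). intros x [n ->]. apply Hub. }
  apply is_lim_seq_Reals in HFp.
  assert (HFF : Fp <= F (1/2)).
  { pose proof (is_lim_seq_le _ (fun _ => F (1/2)) Fp (F (1/2)) Hub HFp (is_lim_seq_const _)) as Hq. exact Hq. }
  destruct L_exists as [LL [HLL [HlnL HLL1]]].
  assert (Hmm : P - s = m) by (unfold P; ring).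
  pose proof (B_lim P s Fp LL Hs ltac:(lra) HFp HLL) as HB.
  rewrite Hmm in HB.
  assert (Hpos : 0 < m / s - Rinf m s LL / s).
  { destruct (Rle_lt_dec (p - s) 1) as [H1|H1].
    - assert (Em : m = p - s) by (unfold m; apply Rmin_left; lra).
      apply (B_alg m s LL (ln 2)); try lra.
      rewrite Em. replace (s + (p - s)) with p by ring.
      assert (E2 : (1 - ln 2) * p^2 = ln 2 * ((1 / ln 2 - 1) * p^2)) by (field; lra).
      rewrite E2.
      assert (E3 : (p - s) * s * (s + 1) * ln 2 = ln 2 * ((p - s) * s * (s + 1))) by ring.
      rewrite E3. apply Rle_ge. apply Rmult_le_compat_l; lra.
    - assert (Em : m = 1) by (unfold m; apply Rmin_right; lra).
      rewrite Em. apply B_alg1; lra. }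
  lra.
Qed.


Lemma beta_lhs_eq F a b x : beta_lhs F a b x =
  (phiinv a b (x / (1 - x)) / (1 + phiinv a b (x / (1 - x)))) * F (phiinv a b (x / (1 - x)) / (1 + phiinv a b (x / (1 - x)))).
Proof. reflexivity. Qed.

Theorem mainTheorem6 (c d a b : R) (F : R -> R) (beta : R)
  (hc : 0 < c) (hd : 0 < d) (ha0 : 0 < a) (ha1 : a < 1) (hb : 1 < b)
  (* F x = F(c,d;c+d;x) on (0,1), as the sum of the hypergeometric series *)
  (hF : forall x, 0 < x < 1 -> infinite_sum (hyp_term c d (c + d) x) (F x))
  (* beta is the unique solution in (0,1) of g(phi^{-1}(x/(1-x)) / (1+phi^{-1}(x/(1-x)))) = 1 *)
  (hbeta : 0 < beta < 1)
  (hsol : beta_lhs F a b beta = 1)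
  (huniq : forall x, 0 < x < 1 -> beta_lhs F a b x = 1 -> x = beta) :
  let a0 := c * d / (c + d) in
  let h := a0 ^ 2 / (c + d + 1) in
  let c0 := 1 - 1 / (2 * ln 2) in
  let c1 := 1 / ln 2 - 1 in
  ((a0 - 1) / h <= c0 -> beta > 1 / 2) /\
  ((a0 - 1) / h >= c1 -> beta < 1 / 2).
Proof.
  intros a0 h c0 c1.
  assert (Hcd : 0 < c * d) by nra.
  assert (E : (a0 - 1) / h = (c*d - (c+d)) * (c+d) * (c+d+1) / (c*d)^2).
  { unfold h, a0. field. repeat split; nra. }
  assert (Hq : 0 < (c*d)^2) by (apply pow_lt; lra).
  assert (H12 : 0 < 1/2 < 1) by lra.
  pose proof (hF (1/2) H12) as HF12.
  set (t := phiinv a b (beta / (1 - beta))).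
  assert (Ht : 0 < t) by apply phiinv_pos.
  set (u := t / (1 + t)).
  assert (Hu : 0 < u < 1).
  { unfold u. split; [apply Rdiv_lt_0_compat; lra|].
    apply Rmult_lt_reg_r with (1 + t); [lra|]. unfold Rdiv. rewrite Rmult_assoc, Rinv_l by lra. lra. }
  assert (Hlhs : beta_lhs F a b beta = u * F u) by reflexivity.
  split.
  - intro HA. rewrite E in HA.
    assert (HA' : (c*d - (c+d)) * (c+d) * (c+d+1) <= c0 * (c*d)^2).
    { replace ((c*d - (c+d)) * (c+d) * (c+d+1)) with (((c*d - (c+d)) * (c+d) * (c+d+1) / (c*d)^2) * (c*d)^2) by (field; lra).
      apply Rmult_le_compat_r; lra. }
    pose proof (F12_lt c d F hc hd HF12 HA') as HF.
    apply Rnot_le_lt. intro Hb.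
    assert (Hy : 0 < beta / (1 - beta) <= 1).
    { split; [apply Rdiv_lt_0_compat; lra|].
      apply Rmult_le_reg_r with (1 - beta); [lra|]. replace (beta / (1 - beta) * (1 - beta)) with beta by (field; lra). lra. }
    assert (Ht1 : t <= 1) by (apply phiinv_le1; lra).
    assert (Hu2 : u <= 1/2).
    { unfold u. apply Rmult_le_reg_r with (1 + t); [lra|]. replace (t / (1 + t) * (1 + t)) with t by (field; lra). lra. }
    destruct (F_mono c d F u (1/2) hc hd ltac:(lra) ltac:(lra) hF) as [H0 H1].
    assert (u * F u <= 1/2 * F (1/2)) by (apply Rmult_le_compat; lra).
    lra.
  - intro HB. rewrite E in HB.
    assert (HB' : (c*d - (c+d)) * (c+d) * (c+d+1) >= c1 * (c*d)^2).
    { replace ((c*d - (c+d)) * (c+d) * (c+d+1)) with (((c*d - (c+d)) * (c+d) * (c+d+1) / (c*d)^2) * (c*d)^2) by (field; lra).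
      apply Rle_ge. apply Rmult_le_compat_r; lra. }
    pose proof (F12_gt c d F hc hd HF12 HB') as HF.
    apply Rnot_le_lt. intro Hb.
    assert (Hy : 1 <= beta / (1 - beta)).
    { apply Rmult_le_reg_r with (1 - beta); [lra|]. replace (beta / (1 - beta) * (1 - beta)) with beta by (field; lra). lra. }
    assert (Ht1 : 1 <= t) by (apply phiinv_ge1; lra).
    assert (Hu2 : 1/2 <= u).
    { unfold u. apply Rmult_le_reg_r with (1 + t); [lra|]. replace (t / (1 + t) * (1 + t)) with t by (field; lra). lra. }
    destruct (F_mono c d F (1/2) u hc hd ltac:(lra) ltac:(lra) hF) as [H0 H1].
    assert (1/2 * F (1/2) <= u * F u) by (apply Rmult_le_compat; lra).
    lra.
Qed.
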